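(* Let $n\ge2$, let $y_{\mathrm{ref}}=(0,\dots,0,1)\in O_n$ and $\ket{\psi_{\mathrm{ref}}}=\ket{\psi_{y_{\mathrm{ref}}}}$. For $y\in O_n$ define $u=y\oplus y_{\mathrm{ref}}\in\{0,1\}^n$, $v\in\{0,1\}^n$ by $v_l=\sum_{j=1}^{l-1}u_j \bmod 2$ for $l=1,\dots,n$, and $v'\in\{0,1\}^{n-1}$ by $v'_i=v_i+v_n \bmod 2$. Let $D(u,v')=Z(v')X(u)$ where $X(u)=\bigotimes_{i=1}^{n-1}X_i^{u_i}$ and $Z(v')=\bigotimes_{i=1}^{n-1}Z_i^{v'_i}$ act on $n-1$ qubits. Then $$\ket{\psi_y}=(-1)^{v\cdot y}\,D(u,v')\ket{\psi_{\mathrm{ref}}},$$ where $v\cdot y=\sum_{i=1}^n v_iy_i \bmod 2$.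
   Context: $E_n$ and $O_n$ are the even- and odd-weight strings in $\{0,1\}^n$. For $x\in E_n$, $\ket{\psi_x}=\ket{x_1\cdots x_{n-1}}$ (computational basis of $n-1$ qubits). For $y\in O_n$, $\ket{\psi_y}=\frac1{\sqrt n}\sum_{x\in E_n,\,d_H(x,y)=1}(A_n)_{yx}\ket{\psi_x}$, where $(A_n)_{yx}=\bra{y}A_n\ket{x}$ in the $n$-qubit computational basis (qubit 1 leftmost) and $A_n=\sum_{l=1}^nZ^{\otimes(l-1)}\otimes X\otimes I^{\otimes(n-l)}$. $X_i,Z_i$ are Pauli operators on qubit $i$; $d_H$ is Hamming distance. *)

(* Defs.v *)
(* Qubits/bit positions are 0-based: paper's qubit i is index i-1. *)
From mathcomp Require Import all_boot all_order all_algebra.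
Set Implicit Arguments. Unset Strict Implicit. Unset Printing Implicit Defensive.
Import Order.TTheory GRing.Theory Num.Theory.
Local Open Scope ring_scope.

Notation bits n := {ffun 'I_n -> bool}.

Definition weight n (x : bits n) : nat := (\sum_(i < n) (x i : nat))%N.
Definition dH n (x y : bits n) : nat := (\sum_(i < n) (x i != y i : nat))%N.

Section Q.
Variable R : rcfType.

Notation state m := {ffun bits m -> R}.

(* Single-qubit matrix elements <a|P|b> *)
Definition pI (a b : bool) : R := (a == b)%:R.
Definition pX (a b : bool) : R := (a != b)%:R.
Definition pZ (a b : bool) : R := (a == b)%:R * (-1) ^+ b.

Definition tens m (P : 'I_m -> bool -> bool -> R) (y x : bits m) : R :=
  \prod_(i < m) P i (y i) (x i).

Definition apply m (M : bits m -> bits m -> R) (s : state m) : state m :=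
  [ffun a => \sum_(b : bits m) M a b * s b].

Definition sscale m (c : R) (s : state m) : state m := [ffun a => c * s a].

Definition ssum m (I : finType) (P : pred I) (F : I -> state m) : state m :=
  [ffun a => \sum_(i | P i) F i a].

Definition ket m (b : bits m) : state m := [ffun a => (a == b)%:R].

(* (A_n)_{yx} = <y| sum_l Z^{(l-1)} (x) X (x) I^{(n-l)} |x> *)
Definition A_entry n (y x : bits n) : R :=
  \sum_(l < n) tens (fun i : 'I_n => if (i < l)%N then pZ else if i == l then pX else pI) y x.

Definition trunc n (x : bits n) : bits n.-1 :=
  [ffun i : 'I_n.-1 => x (widen_ord (leq_pred n) i)].

Definition psi n (y : bits n) : state n.-1 :=
  if odd (weight y) then
    sscale (Num.sqrt (n%:R))^-1
      (ssum (fun x : bits n => ~~ odd (weight x) && (dH x y == 1%N))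
            (fun x => sscale (A_entry y x) (ket (trunc x))))
  else ket (trunc y).

Definition yref n : bits n := [ffun i : 'I_n => val i == n.-1].

Definition xorb_bits n (y z : bits n) : bits n := [ffun i => y i (+) z i].

(* v_l = sum_{j<l} u_j mod 2 (0-based l) *)
Definition vfun n (u : bits n) (l : nat) : bool :=
  odd (\sum_(j < n | (j < l)%N) (u j : nat)).

Definition Xop n (u : bits n) : bits n.-1 -> bits n.-1 -> R :=
  tens (fun i : 'I_n.-1 => if u (widen_ord (leq_pred n) i) then pX else pI).

Definition Zop m (w : 'I_m -> bool) : bits m -> bits m -> R :=
  tens (fun i : 'I_m => if w i then pZ else pI).

Definition vprime n (u : bits n) (i : 'I_n.-1) : bool :=
  vfun u i (+) vfun u n.-1.

Definition vdot n (u y : bits n) : bool :=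
  odd (\sum_(i < n) (vfun u i && y i : nat)).

End Q.

(* Main.v *)
Require Import Defs.
From mathcomp Require Import all_boot all_order all_algebra.
Import GRing.Theory Num.Theory.
Local Open Scope ring_scope.
Set Implicit Arguments.

Lemma oddSum (I : Type) (r : seq I) (P : pred I) (F : I -> bool) :
  odd (\sum_(i <- r | P i) (F i : nat))%N = \big[addb/false]_(i <- r | P i) F i.
Proof.
rewrite (big_morph odd oddD (erefl : odd 0 = false)).
by apply: eq_bigr => i _; rewrite oddb.
Qed.

Lemma prod_sign (R : pzRingType) (I : Type) (r : seq I) (P : pred I) (F : I -> bool) :
  \prod_(i <- r | P i) (-1) ^+ (F i) = (-1) ^+ (\big[addb/false]_(i <- r | P i) F i) :> R.
Proof.
by rewrite (big_morph (fun b : bool => (-1) ^+ b : R) (@signr_addb R) (erefl : (-1) ^+ false = 1 :> R)).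
Qed.

Definition Pn (Y : nat -> bool) (l : nat) := \big[addb/false]_(0 <= j < l) Y j.

Lemma sum_eqk N K (F : nat -> bool) :
  \big[addb/false]_(0 <= i < N) (F i && (i == K)) = (K < N)%N && F K.
Proof.
elim: N => [|N IH]; first by rewrite big_geq.
rewrite big_nat_recr //= IH ltnS.
case: (eqVneq N K) => [->|ne]; first by rewrite ltnn leqnn andbT.
by rewrite andbF addbF ltn_neqAle eq_sym ne.
Qed.

Lemma keyN m (Y : nat -> bool) K (hK : (K < m.+2)%N) (hodd : Pn Y m.+2 = true) :
  Pn Y K = \big[addb/false]_(0 <= i < m.+2) (Pn Y i && Y i) (+)
    \big[addb/false]_(0 <= i < m.+1) ((Pn Y i (+) Pn Y m.+1) && (Y i (+) (i == K))).
Proof.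
rewrite big_nat_recr //=.
have -> : \big[addb/false]_(0 <= i < m.+1) ((Pn Y i (+) Pn Y m.+1) && (Y i (+) (i == K)))
  = \big[addb/false]_(0 <= i < m.+1) (Pn Y i && Y i) (+) \big[addb/false]_(0 <= i < m.+1) (Pn Y i && (i == K))
   (+) (\big[addb/false]_(0 <= i < m.+1) (Pn Y m.+1 && Y i) (+) \big[addb/false]_(0 <= i < m.+1) (Pn Y m.+1 && (i == K))).
  by rewrite -!big_split; apply: eq_bigr => i _; rewrite andb_addl !andb_addr.
rewrite sum_eqk.
rewrite -(big_distrr (plus:=addb)) /=.
have -> : \big[addb/false]_(0 <= i < m.+1) (Pn Y m.+1 && (i == K))
  = (K < m.+1)%N && Pn Y m.+1.
  by rewrite (sum_eqk _ _ (fun _ => Pn Y m.+1)).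
have {}hodd : Pn Y m.+1 (+) Y m.+1 = true by rewrite -hodd /Pn [in RHS]big_nat_recr.
move: hodd; set c := Pn Y m.+1; set vd := \big[addb/false]_(0 <= i < m.+1) _.
change (\big[addb/false]_(0 <= i < m.+1) Y i) with c.
case: ltnP => hk.
  by case: c; case: (Y m.+1); case: vd; case: (Pn Y K).
have -> : K = m.+1 by apply/eqP; rewrite eqn_leq hk -ltnS hK.
by rewrite -/c; case: c; case: (Y m.+1); case: vd.
Qed.


Section S2.
Variable R : rcfType.

Lemma neq_ex {m} {a b : bits m} : a != b -> exists i, a i != b i.
Proof.
move=> ne; apply/existsP; apply: contraR ne => /existsPn H.
by apply/eqP/ffunP => i; apply/eqP; have := H i; rewrite negbK.
Qed.

Lemma apply_Z m (w : 'I_m -> bool) (s : {ffun bits m -> R}) a :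
  apply (Zop R w) s a = (-1) ^+ (\big[addb/false]_i (w i && a i)) * s a.
Proof.
rewrite ffunE (bigD1 a) //= big1 ?addr0.
  congr (_ * _); rewrite /Zop /tens -prod_sign; apply: eq_bigr => i _.
  by case: (w i); rewrite /pZ /pI eqxx ?mul1r.
move=> b nb; have [i hi] := neq_ex nb.
rewrite /Zop /tens (bigD1 i) //=.
by case: (w i); rewrite /pZ /pI eq_sym (negbTE hi) ?mul0r.
Qed.

Lemma apply_X n (u : bits n) (s : {ffun bits n.-1 -> R}) b :
  apply (Xop R u) s b = s [ffun i => b i (+) u (widen_ord (leq_pred n) i)].
Proof.
set c0 := [ffun i => _].
rewrite ffunE (bigD1 c0) //= big1 ?addr0.
  rewrite /Xop /tens big1 ?mul1r // => i _.
  rewrite /c0 ffunE; case: (u _); rewrite /pX /pI.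
    by case: (b i).
  by rewrite addbF eqxx.
move=> c nc; have [i hi] := neq_ex nc.
rewrite /Xop /tens (bigD1 i) //=.
suff -> : (if u (widen_ord (leq_pred n) i) then pX R else pI R) (b i) (c i) = 0 by rewrite !mul0r.
move: hi; rewrite /c0 ffunE; case: (u _); rewrite /pX /pI.
  by case: (b i); case: (c i).
by rewrite addbF eq_sym => /negbTE ->.
Qed.
End S2.


Section S3.
Variable R : rcfType.

Definition flip n (y : bits n) (k : 'I_n) : bits n := [ffun i => y i (+) (i == k)].

Lemma psi_odd n (y : bits n) (hy : odd (weight y)) a :
  psi R y a = (Num.sqrt (n%:R))^-1 *
    \sum_(x | ~~ odd (weight x) && (dH x y == 1%N)) A_entry R y x * (a == trunc x)%:R.
Proof.
rewrite /psi hy !ffunE; congr (_ * _); apply: eq_bigr => x _.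
by rewrite !ffunE.
Qed.

Lemma dH1 n (x y : bits n) : dH x y = 1%N -> exists k, x = flip y k.
Proof.
rewrite /dH => h.
have [k hk] : exists k, x k != y k.
  apply/existsP; apply: contraT => /existsPn H.
  move: h; rewrite big1 // => i _; by have := H i; rewrite negbK => ->.
exists k; move: h; rewrite (bigD1 k) //= hk add1n => /eqP; rewrite eqSS => /eqP h0.
apply/ffunP => i; rewrite ffunE.
case: (eqVneq i k) => [->|ne]; first by move: hk; case: (x k); case: (y k).
rewrite addbF.
move/eqP: h0; rewrite sum_nat_eq0 => /forallP H; have := H i; rewrite ne /=.
by case: (x i); case: (y i).
Qed.

Lemma A_flip n (y : bits n) k :
  A_entry R y (flip y k) = (-1) ^+ (\big[addb/false]_(i : 'I_n | (i < k)%N) y i).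
Proof.
rewrite /A_entry (bigD1 k) //= big1 ?addr0.
  rewrite /tens -prod_sign [RHS]big_mkcond /=; apply: eq_bigr => i _; rewrite ffunE.
  case: ltnP => hik.
    have -> : (i == k) = false by apply/negbTE; rewrite -val_eqE /= neq_ltn hik.
    by rewrite addbF /pZ eqxx mul1r.
  case: (eqVneq i k) => [->|ne].
    by rewrite /pX; case: (y k).
  by rewrite /pI addbF eqxx.
move=> l nl; rewrite /tens (bigD1 k) //= ffunE eqxx.
suff -> : (if (k < l)%N then pZ R else if k == l then pX R else pI R) (y k) (y k (+) true) = 0
  by rewrite mul0r.
case: ifP => _; first by rewrite /pZ; case: (y k); rewrite mul0r.
by rewrite eq_sym (negbTE nl) /pI; case: (y k).
Qed.

Lemma A_flip_ref n k : A_entry R (yref n) (flip (yref n) k) = 1.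
Proof.
rewrite A_flip big1 // => i hi; rewrite ffunE; apply/negbTE.
by rewrite neq_ltn; apply/orP; left; apply: (leq_trans hi); rewrite -ltnS; case: n k {i hi} => [[]|].
Qed.

Lemma weight_odd n (y : bits n) : odd (weight y) = \big[addb/false]_i y i.
Proof. exact: oddSum. Qed.

Lemma flip_even n (x y : bits n) : odd (weight y) -> dH x y = 1%N -> ~~ odd (weight x).
Proof.
move=> hy /dH1 [k ->]; move: hy; rewrite !weight_odd.
have -> : \big[addb/false]_i flip y k i = \big[addb/false]_i y i (+) \big[addb/false]_i (i == k).
  by rewrite -big_split; apply: eq_bigr => i _; rewrite /flip ffunE.
rewrite [X in _ (+) X](bigD1 k) //= eqxx [X in _ (+) (true (+) X)]big1.
  by move=> ->.
by move=> i /negbTE.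
Qed.

Lemma yref_odd n : (0 < n)%N -> odd (weight (yref n)).
Proof.
move=> hn; have hp : (n.-1 < n)%N by rewrite ltn_predL.
rewrite weight_odd (bigD1 (Ordinal hp)) //= ffunE eqxx big1 // => i ni.
by rewrite ffunE; apply/negbTE; move: ni; rewrite -val_eqE.
Qed.
End S3.


Section K.
Variables (m : nat) (y : bits m.+2).
Let Y (j : nat) := y (inord j).

Lemma hY (i : 'I_m.+2) : y i = Y i.
Proof. by rewrite /Y inord_val. Qed.

Lemma toP l : (l <= m.+2)%N -> \big[addb/false]_(i : 'I_m.+2 | (i < l)%N) y i = Pn Y l.
Proof.
move=> hl; rewrite /Pn (big_nat_widen _ _ _ _ _ hl) big_mkord.
by apply: eq_big => // i _; rewrite hY.
Qed.

Lemma vfunP l : (l <= m.+1)%N -> vfun (xorb_bits y (yref m.+2)) l = Pn Y l.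
Proof.
move=> hl; rewrite /vfun oddSum -toP; last by apply: leq_trans hl _.
apply: eq_bigr => j hj; rewrite !ffunE.
suff -> : (val j == (m.+2).-1) = false by rewrite addbF.
apply/negbTE; rewrite neq_ltn; apply/orP; left.
by apply: leq_trans hj hl.
Qed.

Lemma key (k : 'I_m.+2) (hy : odd (weight y)) :
  \big[addb/false]_(i : 'I_m.+2 | (i < k)%N) y i =
  vdot (xorb_bits y (yref m.+2)) y (+)
  \big[addb/false]_i (vprime (xorb_bits y (yref m.+2)) i && trunc (flip y k) i).
Proof.
rewrite toP 1?ltnW //.
have -> : vdot (xorb_bits y (yref m.+2)) y = \big[addb/false]_(0 <= i < m.+2) (Pn Y i && Y i).
  rewrite /vdot oddSum big_mkord; apply: eq_bigr => i _.
  rewrite vfunP; [by rewrite hY | rewrite -ltnS; exact: ltn_ord].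
have -> : \big[addb/false]_i (vprime (xorb_bits y (yref m.+2)) i && trunc (flip y k) i)
   = \big[addb/false]_(0 <= i < m.+1) ((Pn Y i (+) Pn Y m.+1) && (Y i (+) (i == k))).
  rewrite big_mkord; apply: eq_bigr => i _.
  rewrite /vprime vfunP; last exact: ltnW.
  rewrite vfunP // /trunc /flip !ffunE.
  by rewrite hY -val_eqE.
apply: keyN => //.
move: hy; rewrite weight_odd => hy; rewrite -[RHS]hy /Pn big_mkord.
by apply: eq_bigr => i _; rewrite hY.
Qed.
End K.

Unset Implicit Arguments.
Theorem theorem2 (R : rcfType) (n : nat) (hn : (2 <= n)%N) (y : bits n)
  (hy : odd (weight y)) :
  let u := xorb_bits y (yref n) in
  psi R y =
    sscale ((-1) ^+ vdot u y) (apply (Zop R (vprime u)) (apply (Xop R u) (psi R (yref n)))).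
Proof.
case: n hn y hy => [|[|m]] // _ y hy u.
have hr := @yref_odd m.+2 (ltn0Sn _).
apply/ffunP => a.
rewrite ffunE apply_Z apply_X (psi_odd R _ hy) (psi_odd R _ hr).
rewrite [RHS]mulrA [RHS]mulrA [in RHS](mulrC _ (Num.sqrt _)^-1) -[RHS]mulrA.
congr (_ * _); rewrite mulr_sumr.
have hinj : injective (fun x : bits m.+2 => xorb_bits x u).
  apply: (can_inj (g := fun x : bits m.+2 => xorb_bits x u)) => x.
  by apply/ffunP => i; rewrite !ffunE addbK.
rewrite [RHS](reindex_inj hinj) /=.
apply: eq_big => [x|x].
  have hdd : dH (xorb_bits x u) (yref m.+2) = dH x y.
    apply: eq_bigr => i _; rewrite !ffunE.
    by case: (x i); case: (y i); case: (\val i == _).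
  rewrite hdd.
  case: eqP => h; last by rewrite !andbF.
  by rewrite (flip_even hy h) (flip_even hr) // hdd.
move=> /andP[_ /eqP hd]; have [k ->] := dH1 hd.
have -> : xorb_bits (flip y k) u = flip (yref m.+2) k.
  apply/ffunP => i; rewrite !ffunE.
  by case: (y i); case: (i == k); case: (\val i == _).
rewrite A_flip A_flip_ref mul1r.
have hind : ([ffun i => a i (+) u (widen_ord (leq_pred m.+2) i)] == trunc (flip (yref m.+2) k))
   = (a == trunc (flip y k)).
  apply/eqP/eqP => H; apply/ffunP => i; move/ffunP: H => /(_ i); rewrite !ffunE.
  set w := widen_ord _ i.
  by case: (a i); case: (y w); case: (w == k); case: (\val w == _).
  set w := widen_ord _ i.
  by case: (a i); case: (y w); case: (w == k); case: (\val w == _).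
rewrite hind; case: eqP => [->|_]; last by rewrite !mulr0.
by rewrite !mulr1 -signr_addb (@key m y k hy).
Qed.
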